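(* Let $\lambda$ be a partition with $n$ parts and let $\eta \in UGC_\lambda(n)$. Then the gapless $\lambda$-tuple $\Delta_\lambda(\eta)$ attains maximum efficiency.
   Context: Fix an integer $n \geq 1$ and write $[k] = \{1,\dots,k\}$. A partition is $\lambda = (\lambda_1,\dots,\lambda_n)$ with $\lambda_1 \geq \dots \geq \lambda_n \geq 0$ integers. Let $R_\lambda \subseteq [n-1]$ be the set of $q \in [n-1]$ with $\lambda_q > \lambda_{q+1}$; write its elements $q_1 < \dots < q_r$, and set $q_0 := 0$, $q_{r+1} := n$. For $h \in [r+1]$ the $h$-th carrel is the index interval $\{q_{h-1}+1,\dots,q_h\}$. A $\lambda$-tuple is an $n$-tuple $\beta$ with entries in $[n]$, considered with this carrel structure; it is upper if $\beta_i \geq i$ for all $i$. $U_\lambda(n)$ is the set of upper $\lambda$-tuples. Critical indices: for $\beta \in U_\lambda(n)$ and $h \in [r+1]$, set $x_1 := q_h$; given $x_{u-1}$, if some index $x$ with $q_{h-1} < x < x_{u-1}$ satisfies $\beta_{x_{u-1}} - \beta_x > x_{u-1} - x$, let $x_u$ be the largest such $x$, otherwise stop. The $x_u$ are the critical indices of $\beta$ in carrel $h$; the pairs $(x_u,\beta_{x_u})$ form its critical list. For $i \in [n]$ let $x(i)$ be the smallest critical index in the carrel of $i$ with $x(i) \geq i$. The $\lambda$-core is $\Delta_\lambda(\beta) := \delta$ with $\delta_i := \beta_{x(i)} - (x(i)-i)$; the $\lambda$-platform is $\Xi_\lambda(\beta) := \xi$ with $\xi_i := \beta_{x(i)}$.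 The critical list is a flag critical list if for every $h \in [r]$, $\beta_{q_h} \leq \beta_k$ where $k$ is the smallest critical index of $\beta$ in carrel $h+1$. $UGC_\lambda(n)$: the $\beta \in U_\lambda(n)$ with flag critical list. $UBP_\lambda(n)$: the $\beta \in U_\lambda(n)$ with $\beta \leq \Xi_\lambda(\beta)$ entrywise. A gapless $\lambda$-tuple is a $\beta \in U_\lambda(n)$ with flag critical list whose entries strictly increase within each carrel. A semistandard tableau of shape $\lambda$ is a filling of the Young diagram of $\lambda$ (row $i$ has $\lambda_i$ boxes) with values in $[n]$, weakly increasing along rows and strictly increasing down columns. For $\beta \in U_\lambda(n)$, $s_\lambda(\beta;x) := \sum_T \prod_{k} x_k^{\theta_k(T)}$ over the semistandard tableaux $T$ of shape $\lambda$ whose values in row $i$ are all at most $\beta_i$, where $\theta_k(T)$ is the number of values of $T$ equal to $k$. For integers $u$, $i \geq 1$, $k \geq 1$: $h_u(i,k;x) := 0$ if $u<0$, and otherwise $h_u(i,k;x) := \sum x_{t_1}\cdots x_{t_u}$ over $i \leq t_1 \leq \dots \leq t_u \leq k$. For $\beta \in U_\lambda(n)$ the Gessel–Viennot determinant of $\beta$ is the $n\times n$ matrix determinant with $(i,j)$ entry $h_{\lambda_j - j + i}(i,\beta_j;x)$. An element $\eta \in UGC_\lambda(n) \cap UBP_\lambda(n)$ attains maximum efficiency if the total number of monomials appearing among the entries of its Gessel–Viennot matrix is smaller than that for the Gessel–Viennot matrix of any other $\eta' \in UGC_\lambda(n) \cap UBP_\lambda(n)$ with $s_\lambda(\eta';x)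 = s_\lambda(\eta;x)$. *)

(* Defs.v *)
From mathcomp Require Import all_boot all_order all_algebra.
From mathcomp Require Import mpoly.
Unset Printing Implicit Defensive.
Import GRing.Theory.

(* Sequences of length n represent n-tuples; [ent s i] is the 1-based entry s_i. *)
Definition ent (s : seq nat) (i : nat) : nat := nth 0 s i.-1.

Definition is_partition (n : nat) (lam : seq nat) : bool :=
  (size lam == n) && sorted geq lam.

Definition inR (n : nat) (lam : seq nat) (q : nat) : bool :=
  [&& 1 <= q, q < n & ent lam q.+1 < ent lam q].

(* carrel of i (1<=i<=n) is the interval (lo i, hi i] *)
Definition clo (n : nat) (lam : seq nat) (i : nat) : nat :=
  \max_(0 <= q < i | inR n lam q) q.
Definition chi (n : nat) (lam : seq nat) (i : nat) : nat :=
  \big[minn/n]_(i <= q < n | inR n lam q) q.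

(* largest y with lo < y < x and beta_x - beta_y > x - y *)
Definition next_crit (beta : seq nat) (lo x : nat) : option nat :=
  let c := [seq y <- iota lo.+1 (x.-1 - lo) | x + ent beta y < ent beta x + y] in
  if c is [::] then None else Some (last 0 c).

Fixpoint crit_from (beta : seq nat) (lo x fuel : nat) : seq nat :=
  x :: match fuel with
       | 0 => [::]
       | f.+1 => match next_crit beta lo x with
                 | Some y => crit_from beta lo y f
                 | None => [::]
                 end
       end.

Definition crit (beta : seq nat) (lo hi : nat) : seq nat := crit_from beta lo hi hi.

Definition xcrit (n : nat) (lam beta : seq nat) (i : nat) : nat :=
  \big[minn/chi n lam i]_(c <- crit beta (clo n lam i) (chi n lam i) | i <= c) c.

Definition core (n : nat) (lam beta : seq nat) : seq nat :=
  [seq ent beta (xcrit n lam beta i) - (xcrit n lam beta i - i) | i <- iota 1 n].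
Definition platform (n : nat) (lam beta : seq nat) : seq nat :=
  [seq ent beta (xcrit n lam beta i) | i <- iota 1 n].

Definition upper (n : nat) (beta : seq nat) : Prop :=
  size beta = n /\ forall i, 1 <= i <= n -> i <= ent beta i <= n.

Definition flag_crit (n : nat) (lam beta : seq nat) : Prop :=
  forall q, inR n lam q ->
    ent beta q <= ent beta (\big[minn/n]_(c <- crit beta q (chi n lam q.+1)) c).

Definition UGC (n : nat) (lam beta : seq nat) : Prop :=
  upper n beta /\ flag_crit n lam beta.
Definition UBP (n : nat) (lam beta : seq nat) : Prop :=
  upper n beta /\ forall i, 1 <= i <= n -> ent beta i <= ent (platform n lam beta) i.

Definition gapless (n : nat) (lam beta : seq nat) : Prop :=
  [/\ upper n beta, flag_crit n lam beta &
      forall i, 1 <= i < n -> chi n lam i = chi n lam i.+1 ->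
        ent beta i < ent beta i.+1].

(* semistandard tableaux of shape lambda, row i bounded by beta_i;
   cell (i,j) (0-based) lies in the diagram iff j < lambda_{i+1};
   values are in 'I_n.+1, with 0 used only (and always) outside the diagram *)
Definition ncols (lam : seq nat) : nat := nth 0 lam 0.
Definition indiag (lam : seq nat) (i j : nat) : bool := j < nth 0 lam i.

Definition ssyt (n : nat) (lam beta : seq nat)
    (T : {ffun 'I_n * 'I_(ncols lam) -> 'I_n.+1}) : bool :=
  [&& [forall c : 'I_n * 'I_(ncols lam),
         if indiag lam c.1 c.2 then (1 <= T c) && (T c <= nth 0 beta c.1)
         else T c == ord0],
      [forall i : 'I_n, forall j1 : 'I_(ncols lam), forall j2 : 'I_(ncols lam),
         (j1 <= j2) && indiag lam i j2 ==> (T (i, j1) <= T (i, j2))] &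
      [forall i1 : 'I_n, forall i2 : 'I_n, forall j : 'I_(ncols lam),
         (i1 < i2) && indiag lam i2 j ==> (T (i1, j) < T (i2, j))]].

(* x_{k+1} is 'X_k for k : 'I_n *)
Definition theta (n : nat) (lam : seq nat)
    (T : {ffun 'I_n * 'I_(ncols lam) -> 'I_n.+1}) (k : 'I_n) : nat :=
  #|[set c : 'I_n * 'I_(ncols lam) | indiag lam c.1 c.2 && (val (T c) == k.+1)]|.

Definition schur (n : nat) (lam beta : seq nat) : {mpoly int[n]} :=
  \sum_(T : {ffun 'I_n * 'I_(ncols lam) -> 'I_n.+1} | ssyt n lam beta T)
     \prod_(k < n) 'X_k ^+ theta n lam T k.

Definition hpoly (n u i k : nat) : {mpoly int[n]} :=
  \sum_(m : 'X_{1..n < u.+1} |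
          (mdeg m == u) && [forall l : 'I_n, (m l != 0) ==> (i <= l.+1 <= k)])
     'X_[bmnm m].

Definition GVmx (n : nat) (lam beta : seq nat) : 'M[{mpoly int[n]}]_n :=
  \matrix_(i < n, j < n)
     (if ent lam j.+1 + i.+1 < j.+1 then 0%R
      else hpoly n (ent lam j.+1 + i.+1 - j.+1) i.+1 (ent beta j.+1)).

Definition GVcost (n : nat) (lam beta : seq nat) : nat :=
  \sum_(i < n) \sum_(j < n) size (msupp (GVmx n lam beta i j)).

Definition max_efficiency (n : nat) (lam eta : seq nat) : Prop :=
  UGC n lam eta /\ UBP n lam eta /\
  forall eta', UGC n lam eta' -> UBP n lam eta' -> eta' <> eta ->
    schur n lam eta' = schur n lam eta ->
    GVcost n lam eta < GVcost n lam eta'.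

(* Main.v *)
Require Import Defs.
From mathcomp Require Import all_boot all_order all_algebra.
From mathcomp Require Import mpoly.
From mathcomp Require Import zify.
Set Implicit Arguments. Unset Strict Implicit. Unset Printing Implicit Defensive.
Import GRing.Theory Num.Theory.

Lemma bigmin_ge (I : eqType) (r : seq I) (P : pred I) (F : I -> nat) d k :
  (k <= \big[minn/d]_(i <- r | P i) F i) =
  (k <= d) && all (fun i => P i ==> (k <= F i)) r.
Proof.
elim: r => [|x r IH]; first by rewrite big_nil andbT.
rewrite big_cons /=; case: ifP => Px /=.
- by rewrite leq_min IH; case: (k <= F x); case: (k <= d).
- by rewrite IH.
Qed.

Lemma bigmin_leF (I : eqType) (r : seq I) (P : pred I) (F : I -> nat) d x :
  x \in r -> P x -> \big[minn/d]_(i <- r | P i) F i <= F x.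
Proof.
move=> xr Px; have := leqnn (\big[minn/d]_(i <- r | P i) F i).
by rewrite bigmin_ge => /andP[_ /allP /(_ x xr)]; rewrite Px.
Qed.

Lemma bigmin_led (I : eqType) (r : seq I) (P : pred I) (F : I -> nat) d :
  \big[minn/d]_(i <- r | P i) F i <= d.
Proof.
have := leqnn (\big[minn/d]_(i <- r | P i) F i).
by rewrite bigmin_ge => /andP[].
Qed.

Lemma bigmin_geP (I : eqType) (r : seq I) (P : pred I) (F : I -> nat) d k :
  k <= d -> (forall i, i \in r -> P i -> k <= F i) ->
  k <= \big[minn/d]_(i <- r | P i) F i.
Proof.
move=> kd H; rewrite bigmin_ge kd /=; apply/allP=> i ir; apply/implyP; exact: H.
Qed.

Lemma bigmin_mem (I : eqType) (r : seq I) (P : pred I) (F : I -> nat) d :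
  \big[minn/d]_(i <- r | P i) F i = d \/
  exists2 i, (i \in r) && P i & \big[minn/d]_(i <- r | P i) F i = F i.
Proof.
elim: r => [|x r IH]; first by left; rewrite big_nil.
rewrite big_cons; case: ifP => Px.
- case: (leqP (F x) (\big[minn/d]_(i <- r | P i) F i)) => h.
  + right; exists x; first by rewrite inE eqxx Px.
    by [].
  + case: IH => [->|[i /andP[ir Pi] e]]; [by left|].
    by right; exists i; rewrite ?inE ?ir ?Pi ?orbT.
- case: IH => [->|[i /andP[ir Pi] e]]; [by left|].
  by right; exists i; rewrite ?inE ?ir ?Pi ?orbT.
Qed.

Lemma bigmax_le (I : eqType) (r : seq I) (P : pred I) (F : I -> nat) k :
  (\big[maxn/0]_(i <- r | P i) F i <= k) = all (fun i => P i ==> (F i <= k)) r.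
Proof.
elim: r => [|x r IH]; first by rewrite big_nil.
rewrite big_cons /=; case: ifP => Px /=.
- by rewrite geq_max IH.
- by rewrite IH.
Qed.

Lemma bigmax_geF (I : eqType) (r : seq I) (P : pred I) (F : I -> nat) x :
  x \in r -> P x -> F x <= \big[maxn/0]_(i <- r | P i) F i.
Proof.
move=> xr Px; have := leqnn (\big[maxn/0]_(i <- r | P i) F i).
by rewrite bigmax_le => /allP /(_ x xr); rewrite Px.
Qed.

Lemma bigmax_mem (I : eqType) (r : seq I) (P : pred I) (F : I -> nat) :
  \big[maxn/0]_(i <- r | P i) F i = 0 \/
  exists2 i, (i \in r) && P i & \big[maxn/0]_(i <- r | P i) F i = F i.
Proof.
elim: r => [|x r IH]; first by left; rewrite big_nil.
rewrite big_cons; case: ifP => Px.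
- case: (leqP (\big[maxn/0]_(i <- r | P i) F i) (F x)) => h.
  + right; exists x; first by rewrite inE eqxx Px.
    by [].
  + case: IH => [->|[i /andP[ir Pi] e]]; [by left|].
    by right; exists i; rewrite ?inE ?ir ?Pi ?orbT.
- case: IH => [->|[i /andP[ir Pi] e]]; [by left|].
  by right; exists i; rewrite ?inE ?ir ?Pi ?orbT.
Qed.

Lemma lam_mono n lam a b : is_partition n lam -> a <= b -> nth 0 lam b <= nth 0 lam a.
Proof.
move=> /andP[/eqP sz so] ab.
case: (ltnP b (size lam)) => hb; last by rewrite nth_default.
have ha : a < size lam by apply: leq_ltn_trans hb.
have := sorted_leq_nth (leT := geq) _ _ 0 so.
have tr : transitive geq by move=> x y z /= h1 h2; apply: leq_trans h2 h1.
move=> /(_ tr (@leqnn)); apply => //.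
Qed.

Lemma ent_mono n lam a b : is_partition n lam -> 1 <= a <= b -> ent lam b <= ent lam a.
Proof. move=> P /andP[a1 ab]; apply: (lam_mono P); lia. Qed.

Lemma ent_big n lam b : is_partition n lam -> n < b -> ent lam b = 0.
Proof. move=> /andP[/eqP sz _] hb; rewrite /ent nth_default //; lia. Qed.

Lemma inR_bounds n lam q : inR n lam q -> 1 <= q < n.
Proof. by case/and3P=> -> ->. Qed.

Lemma chi_bounds n lam i : i <= n -> i <= chi n lam i <= n.
Proof.
move=> hi; rewrite /chi bigmin_led andbT.
apply: bigmin_geP => // q; rewrite mem_index_iota; lia.
Qed.

Lemma chi_inR n lam i : chi n lam i < n -> inR n lam (chi n lam i).
Proof.
rewrite /chi; have [->|[q /andP[_ Pq] ->]] := bigmin_mem (index_iota i n) (fun q => inR n lam q) (fun q => q) n => //; by rewrite ltnn.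
Qed.

Lemma chi_noR n lam i q : i <= q < chi n lam i -> ~~ inR n lam q.
Proof.
move=> /andP[iq qc]; apply/negP=> Rq.
have := inR_bounds Rq => /andP[_ qn].
have : chi n lam i <= q by apply: bigmin_leF => //; rewrite mem_index_iota iq qn.
lia.
Qed.

Lemma chi_unique n lam i v : i <= v <= n -> (v < n -> inR n lam v) ->
  (forall q, i <= q < v -> ~~ inR n lam q) -> chi n lam i = v.
Proof.
move=> /andP[iv vn] hR hno.
have [ic cn] := andP (chi_bounds lam (leq_trans iv vn)).
case: (ltngtP (chi n lam i) v) => // h.
- have R := chi_inR (n:=n) (lam:=lam) (i:=i) (leq_trans h vn).
  by have := hno _ (introT andP (conj ic h)); rewrite R.
- have := chi_noR (q := v) (lam := lam) (n := n) (i := i); rewrite iv h hR //; lia.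
Qed.

Lemma clo_bounds n lam i : 1 <= i -> clo n lam i < i.
Proof.
move=> hi; rewrite /clo; have [->|[q /andP[]]] := bigmax_mem (index_iota 0 i) (fun q => inR n lam q) (fun q => q) => //.
by rewrite mem_index_iota => /andP[_ h] _ ->.
Qed.

Lemma clo_inR n lam i : 0 < clo n lam i -> inR n lam (clo n lam i).
Proof. rewrite /clo; by have [->|[q /andP[_ Pq] ->]] := bigmax_mem (index_iota 0 i) (fun q => inR n lam q) (fun q => q). Qed.

Lemma clo_noR n lam i q : clo n lam i < q < i -> ~~ inR n lam q.
Proof.
move=> /andP[cq qi]; apply/negP=> Rq.
have : q <= clo n lam i.
  by apply: (@bigmax_geF nat (index_iota 0 i) (fun q => inR n lam q) (fun q => q) q) => //; rewrite mem_index_iota qi.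
lia.
Qed.

Lemma clo_unique n lam i v : v < i -> (0 < v -> inR n lam v) ->
  (forall q, v < q < i -> ~~ inR n lam q) -> clo n lam i = v.
Proof.
move=> vi hR hno.
have ci := clo_bounds n lam (leq_ltn_trans (leq0n v) vi).
case: (ltngtP (clo n lam i) v) => // h.
- have := clo_noR (q := v) (lam := lam) (n := n) (i := i); rewrite vi h hR //; lia.
- have R := clo_inR (n:=n) (lam:=lam) (i:=i) (leq_ltn_trans (leq0n v) h).
  by have := hno _ (introT andP (conj h ci)); rewrite R.
Qed.

Lemma carrel_same n lam i r : 1 <= i <= n -> clo n lam i < r <= chi n lam i ->
  clo n lam r = clo n lam i /\ chi n lam r = chi n lam i.
Proof.
move=> /andP[i1 iN] /andP[cr rc].
have [ic cn] := andP (chi_bounds lam iN).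
have ci := clo_bounds n lam i1.
split.
- apply: clo_unique => //; first by move/clo_inR.
  move=> q /andP[cq qr]; case: (ltnP q i) => qi; first by apply: (clo_noR (i:=i)); rewrite cq qi.
  apply: (chi_noR (i:=i)); rewrite qi; lia.
- apply: chi_unique; first by lia.
  + by move/chi_inR.
  move=> q /andP[rq qc]; case: (ltnP q i) => qi; last by apply: (chi_noR (i:=i)); rewrite qi qc.
  apply: (clo_noR (i:=i)); rewrite qi; lia.
Qed.

Lemma chi_step n lam i : 1 <= i < n -> chi n lam i = chi n lam i.+1 -> ~~ inR n lam i.
Proof.
move=> /andP[i1 iN] e; apply/negP=> Ri.
have : chi n lam i = i by apply: chi_unique; rewrite ?leqnn ?(ltnW iN) //; lia.
have := chi_bounds lam iN; have := chi_bounds lam (iN : i.+1 <= n); lia.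
Qed.

Lemma noR_step n lam i : 1 <= i < n -> ~~ inR n lam i -> chi n lam i = chi n lam i.+1.
Proof.
move=> /andP[i1 iN] nR.
have [ic cn] := andP (chi_bounds lam (ltnW iN)).
have [ic' cn'] := andP (chi_bounds lam (iN : i.+1 <= n)).
have ne : chi n lam i != i.
  by apply/eqP=> e; have := chi_inR (n:=n) (lam:=lam) (i:=i); rewrite e iN => /(_ isT); apply/negP.
symmetry; apply: chi_unique; first by lia.
- by move/chi_inR.
- move=> q /andP[iq qc]; apply: (chi_noR (i:=i)); lia.
Qed.

Lemma lam_carrel n lam i r : is_partition n lam -> 1 <= i <= n -> i <= r <= chi n lam i ->
  ent lam r = ent lam i.
Proof.
move=> P /andP[i1 iN].
have [_ cn] := andP (chi_bounds lam iN).
elim: r => [|r IH] /andP[ir rc]; first lia.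
case: (ltngtP i r.+1) => h; last by rewrite h.
- have e := IH (introT andP (conj (h : i <= r) (ltnW rc))).
  have nR : ~~ inR n lam r by apply: (chi_noR (i:=i)); rewrite (h : i <= r) rc.
  move: nR; rewrite /inR.
  have := ent_mono P (introT andP (conj (_ : 1 <= r) (leqnSn r))).
  have r1 : 1 <= r by lia.
  move=> /(_ r1); rewrite r1 /= (_ : r < n); [|lia]; rewrite /= -ltnNge; lia.
- lia.
Qed.

Definition viol (b : seq nat) (x y : nat) : bool := x + ent b y < ent b x + y.

Lemma path_le_last (a : nat) l : path leq a l -> forall z, z \in a :: l -> z <= last a l.
Proof.
elim: l a => [|c l IH] a /=; first by move=> _ z; rewrite inE => /eqP->.
move=> /andP[ac pl] z; rewrite inE => /orP[/eqP->|zl].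
- apply: leq_trans ac _; apply: IH => //; exact: mem_head.
- exact: IH.
Qed.

Lemma next_critP b lo x :
  match next_crit b lo x with
  | Some y => [/\ lo < y < x, viol b x y & forall z, y < z < x -> ~~ viol b x z]
  | None => forall z, lo < z < x -> ~~ viol b x z
  end.
Proof.
rewrite /next_crit.
set c := [seq y <- iota lo.+1 (x.-1 - lo) | x + ent b y < ent b x + y].
have memc z : (z \in c) = (lo < z < x) && viol b x z.
  rewrite mem_filter mem_iota /viol andbC; congr (_ && _); lia.
have so : sorted leq c by apply: sorted_filter; [exact: leq_trans|exact: iota_sorted].
case E: c so memc => [|a l] so memc.
- move=> z zr; apply/negP=> v; have := memc z; by rewrite zr v.
- have lm : last a l \in a :: l by exact: mem_last.
  have := memc (last a l); rewrite lm => /esym/andP[r v].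
  rewrite /=; split=> //; move=> z zr; apply/negP=> vz.
  have zc : z \in a :: l by rewrite memc vz andbT; lia.
  have := path_le_last so zc; lia.
Qed.

Lemma crit_from_props b lo : forall f x, lo < x -> x <= f ->
  let s := crit_from b lo x f in
  [/\ forall c, c \in s -> lo < c <= x,
      x \in s,
      forall c y, c \in s -> next_crit b lo c = Some y ->
        y \in s /\ (forall d, d \in s -> d < c -> d <= y)
    & forall c, c \in s -> next_crit b lo c = None -> forall d, d \in s -> c <= d].
Proof.
elim=> [|f IH] x lox xf; first lia.
rewrite /=; have := next_critP b lo x.
case N: (next_crit b lo x) => [y|] => [[/andP[loy yx] _ _]|_].
- have [P1 P2 P5 P6] := IH y loy (ltnSE (leq_trans yx xf)).
  set r := crit_from b lo y f in P1 P2 P5 P6 *.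
  split.
  + move=> c; rewrite inE => /orP[/eqP->|/P1]; lia.
  + exact: mem_head.
  + move=> c y'; rewrite inE => /orP[/eqP->|cr].
    * rewrite N => -[<-]; split; first by rewrite inE P2 orbT.
      move=> d; rewrite inE => /orP[/eqP->|/P1]; lia.
    * move=> e; have [y'r H] := P5 c y' cr e; split; first by rewrite inE y'r orbT.
      move=> d; rewrite inE => /orP[/eqP->|dr] dc; last exact: H.
      have := P1 c cr; lia.
  + move=> c; rewrite inE => /orP[/eqP->|cr]; first by rewrite N.
    move=> e d; rewrite inE => /orP[/eqP->|dr]; last exact: P6.
    have := P1 c cr; lia.
- split.
  + move=> c; rewrite inE => /eqP->; lia.
  + exact: mem_head.
  + by move=> c y'; rewrite inE => /eqP->; rewrite N.
  + by move=> c; rewrite inE => /eqP-> _ d; rewrite inE => /eqP->.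
Qed.

Lemma xc_props b lo hi i : lo < i <= hi ->
  let s := crit b lo hi in
  let m := \big[minn/hi]_(c <- s | i <= c) c in
  [/\ m \in s, i <= m <= hi, (forall c, c \in s -> i <= c -> m <= c)
    & forall z, i <= z < m -> ~~ viol b m z].
Proof.
move=> /andP[loi ihi] s m.
have [P1 P2 P5 P6] := crit_from_props b (f := hi) (x := hi) (leq_trans loi ihi) (leqnn _).
rewrite -/(crit b lo hi) -/s in P1 P2 P5 P6.
have mS : m \in s.
  rewrite /m; have [->|[c /andP[cs _] ->]] := bigmin_mem s (fun c => i <= c) (fun c => c) hi => //.
have mb : i <= m <= hi.
  rewrite /m bigmin_led andbT; apply: bigmin_geP => //.
have mmin : forall c, c \in s -> i <= c -> m <= c.
  move=> c cs ic; exact: (@bigmin_leF nat s (fun c => i <= c) (fun c => c) hi c).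
split=> //.
have := next_critP b lo m.
case N: (next_crit b lo m) => [y|] => [[/andP[loy ym] _ H]|H] z /andP[iz zm].
- have [ys _] := P5 m y mS N.
  case: (leqP i y) => iy; first by have := mmin y ys iy; lia.
  apply: H; lia.
- apply: H; lia.
Qed.

Lemma xc_step b lo hi i : lo < i -> i < hi ->
  let s := crit b lo hi in
  let m := \big[minn/hi]_(c <- s | i <= c) c in
  let m' := \big[minn/hi]_(c <- s | i.+1 <= c) c in
  m = m' \/ (m = i /\ viol b m' i).
Proof.
move=> loi ihi s m m'.
have [P1 P2 P5 P6] := crit_from_props b (f := hi) (x := hi) (ltn_trans loi ihi) (leqnn _).
rewrite -/(crit b lo hi) -/s in P1 P2 P5 P6.
have [mS /andP[im mh] mmin _] := xc_props b (lo := lo) (hi := hi) (i := i) (introT andP (conj loi (ltnW ihi))).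
have [mS' /andP[im' mh'] mmin' _] := xc_props b (lo := lo) (hi := hi) (i := i.+1) (introT andP (conj (ltn_trans loi (ltnSn i)) ihi)).
rewrite -/s -/m in mS im mh mmin; rewrite -/s -/m' in mS' im' mh' mmin'.
have mm' : m <= m' by apply: mmin => //; lia.
case: (ltngtP m m') mm' => // h _; last by left.
right.
have mi : m = i by case: (ltnP i m) => h2; [have := mmin' m mS h2|]; lia.
split=> //.
have := next_critP b lo m'.
case N: (next_crit b lo m') => [y|] => [[/andP[loy ym] v _]|H].
- have [ys H] := P5 m' y mS' N.
  have my : m <= y by apply: H.
  case: (leqP i.+1 y) => iy; first by have := mmin' y ys iy; lia.
  have -> : i = y by lia.
  exact: v.
- have := P6 m' mS' N m mS; lia.
Qed.

Lemma size_core n lam b : size (core n lam b) = n.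
Proof. by rewrite /core size_map size_iota. Qed.

Lemma ent_core n lam b i : 1 <= i <= n ->
  ent (core n lam b) i = ent b (xcrit n lam b i) - (xcrit n lam b i - i).
Proof.
move=> /andP[i1 iN]; rewrite /ent /core (nth_map 0); last by rewrite size_iota; lia.
rewrite nth_iota; last lia.
by rewrite (_ : 1 + i.-1 = i); last lia.
Qed.

Lemma ent_platform n lam b i : 1 <= i <= n ->
  ent (platform n lam b) i = ent b (xcrit n lam b i).
Proof.
move=> /andP[i1 iN]; rewrite /ent /platform (nth_map 0); last by rewrite size_iota; lia.
rewrite nth_iota; last lia.
by rewrite (_ : 1 + i.-1 = i); last lia.
Qed.

Lemma crit_from_ext b b' lo : forall f x,
  (forall c, c \in crit_from b lo x f -> next_crit b' lo c = next_crit b lo c) ->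
  crit_from b' lo x f = crit_from b lo x f.
Proof.
elim=> [|f IH] x H //=.
rewrite H ?mem_head //; case N: (next_crit b lo x) => [y|] //.
congr (_ :: _); apply: IH => c cs; apply: H; by rewrite /= N inE cs orbT.
Qed.

Lemma next_crit_det b lo x (y : option nat) :
  (match y with Some y => lo < y < x | None => true end) ->
  (forall z, lo < z < x -> viol b x z = (if y is Some y then z <= y else false)) ->
  next_crit b lo x = y.
Proof.
move=> hy H; have := next_critP b lo x.
case: (next_crit b lo x) => [y'|] => [[/andP[loy yx] v H']|H'].
- case: y hy H => [y /andP[loy2 yx2]|_] H; last by have := H y'; rewrite v; lia.
  have := H y'; rewrite v loy yx => /(_ isT) /esym y'y.
  have yy' : y <= y'.
    rewrite leqNgt; apply/negP=> lt; have := H' y; rewrite lt yx2 => /(_ isT).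
    by rewrite H ?leqnn ?loy2 ?yx2.
  congr Some; lia.
- case: y hy H => [y /andP[loy2 yx2]|_] H //.
  by have := H' y (introT andP (conj loy2 yx2)); rewrite H ?leqnn ?loy2 ?yx2.
Qed.

Section CoreProps.
Variables (n : nat) (lam b : seq nat).
Hypothesis Hlam : is_partition n lam.
Hypothesis Hb : upper n b.

Let bup i : 1 <= i <= n -> i <= ent b i <= n.
Proof. by case: Hb => _; apply. Qed.

Lemma xcrit_props i : 1 <= i <= n ->
  let lo := clo n lam i in let hi := chi n lam i in
  let m := xcrit n lam b i in
  [/\ (lo < i <= hi) /\ hi <= n, m \in crit b lo hi, i <= m <= hi,
      (forall c, c \in crit b lo hi -> i <= c -> m <= c)
    & forall z, i <= z < m -> ~~ viol b m z].
Proof.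
move=> /andP[i1 iN] lo hi m.
have ci := clo_bounds n lam i1.
have /andP[ich hn] := chi_bounds lam iN.
have := xc_props b (lo := lo) (hi := hi) (i := i) (introT andP (conj ci ich)).
by move=> [mS mb mmin nv]; split=> //; rewrite ci ich hn.
Qed.

Lemma core_upper : upper n (core n lam b).
Proof.
split; first exact: size_core.
move=> i hi; rewrite ent_core //.
have [[_ hn] _ /andP[im mh] _ _] := xcrit_props hi.
have := bup (_ : 1 <= xcrit n lam b i <= n); lia.
Qed.

Lemma core_le i : 1 <= i <= n -> ent (core n lam b) i <= ent b i.
Proof.
move=> hi; rewrite ent_core //.
have [[_ hn] _ /andP[im mh] _ nv] := xcrit_props hi.
case: (ltngtP i (xcrit n lam b i)) im => // h _; last by rewrite -h subnn subn0.
have := nv i; rewrite leqnn h /viol => /(_ isT); lia.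
Qed.

Lemma core_incr i : 1 <= i < n -> chi n lam i = chi n lam i.+1 ->
  ent (core n lam b) i < ent (core n lam b) i.+1.
Proof.
move=> /andP[i1 iN] e.
have hi : 1 <= i <= n by lia.
have hi' : 1 <= i.+1 <= n by lia.
have [[_ hn] _ _ _ _] := xcrit_props hi.
have [[ci' _] _ _ _ _] := xcrit_props hi'.
have cr : clo n lam i < i.+1 <= chi n lam i.
  have := clo_bounds n lam i1; rewrite e; lia.
have [cl _] := carrel_same hi cr.
rewrite ent_core // ent_core //.
have [_ _ /andP[im mh] _ _] := xcrit_props hi.
have [_ _ /andP[im' mh'] _ _] := xcrit_props hi'.
have ih : i < chi n lam i by rewrite e; case/andP: ci'.
have := xc_step b (lo := clo n lam i) (hi := chi n lam i) (i := i) (clo_bounds n lam i1) ih.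
cbv zeta.
rewrite -/(xcrit n lam b i).
rewrite (_ : \big[minn/chi n lam i]_(c <- crit b (clo n lam i) (chi n lam i) | i.+1 <= c) c
   = xcrit n lam b i.+1); last by rewrite /xcrit cl e.
have bm := bup (_ : 1 <= xcrit n lam b i.+1 <= n).
case=> [->|[-> v]].
- lia.
- rewrite /viol in v; lia.
Qed.

Lemma crit_decr lo hi : lo < hi -> forall k c d, c <= k ->
  c \in crit b lo hi -> d \in crit b lo hi -> d < c -> viol b c d.
Proof.
move=> lohi.
have [P1 P2 P5 P6] := crit_from_props b (f := hi) (x := hi) lohi (leqnn _).
rewrite -/(crit b lo hi) in P1 P2 P5 P6.
elim=> [|k IH] c d ck cs ds dc; first lia.
have := next_critP b lo c.
case N: (next_crit b lo c) => [y|] => [[/andP[loy yc] v _]|_].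
- have [ys H] := P5 c y cs N.
  have dy := H d ds dc.
  case: (ltngtP d y) dy => // h _; last by rewrite h.
  have := IH y d (_ : y <= k) ys ds h; rewrite /viol in v *; lia.
- have := P6 c cs N d ds; lia.
Qed.

Lemma xcrit_carrel i z : 1 <= i <= n -> clo n lam i < z <= chi n lam i ->
  xcrit n lam b z = \big[minn/chi n lam i]_(c <- crit b (clo n lam i) (chi n lam i) | z <= c) c.
Proof. by move=> hi hz; rewrite /xcrit; have [-> ->] := carrel_same hi hz. Qed.

Lemma xcrit_self i c : 1 <= i <= n -> c \in crit b (clo n lam i) (chi n lam i) ->
  xcrit n lam b c = c.
Proof.
move=> hi cs.
have [[/andP[ci ich] hn] _ _ _ _] := xcrit_props hi.
have lohi : clo n lam i < chi n lam i by lia.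
have [P1 _ _ _] := crit_from_props b (f := chi n lam i) (x := chi n lam i) lohi (leqnn _).
have /andP[lc ch] := P1 c cs.
rewrite (xcrit_carrel hi (introT andP (conj lc ch))).
have := xc_props b (lo := clo n lam i) (hi := chi n lam i) (i := c) (introT andP (conj lc ch)).
cbv zeta; move=> [mS /andP[cm _] mmin _].
by apply/eqP; rewrite eqn_leq cm mmin.
Qed.

Lemma core_crit_eq i : 1 <= i <= n ->
  crit (core n lam b) (clo n lam i) (chi n lam i) = crit b (clo n lam i) (chi n lam i).
Proof.
move=> hi.
have [[/andP[ci ich] hn] _ _ _ _] := xcrit_props hi.
set lo := clo n lam i in ci *; set hi' := chi n lam i in ich hn *.
have lohi : lo < hi' by lia.
have [P1 P2 P5 P6] := crit_from_props b (f := hi') (x := hi') lohi (leqnn _).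
rewrite -/(crit b lo hi') in P1 P2 P5 P6.
apply: crit_from_ext => c cs.
have /andP[lc ch] := P1 c cs.
have c1n : 1 <= c <= n by lia.
apply: next_crit_det.
  by have := next_critP b lo c; case: (next_crit b lo c) => // y [].
move=> z /andP[lz zc].
have z1n : 1 <= z <= n by lia.
have hz : lo < z <= hi' by lia.
have xz := xcrit_carrel hi hz.
have [mS /andP[zm mh] mmin _] := xc_props b (lo := lo) (hi := hi') (i := z) hz.
rewrite -xz in mS zm mh mmin.
have mc : xcrit n lam b z <= c by apply: mmin => //; lia.
have xc := xcrit_self hi cs.
rewrite /viol ent_core // ent_core // xc subnn subn0.
have bm := bup (_ : 1 <= xcrit n lam b z <= n).
have vd := crit_decr lohi (leqnn c) cs mS.
have := next_critP b lo c.
case N: (next_crit b lo c) => [y|] => [[/andP[loy yc] v _]|_].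
- have [ys H] := P5 c y cs N.
  case: (ltngtP (xcrit n lam b z) c) mc => // h _.
  + have := H _ mS h; have := vd h; rewrite /viol; lia.
  + rewrite h; case: (leqP z y) => zy; last lia.
    have := mmin y ys zy; lia.
- case: (ltngtP (xcrit n lam b z) c) mc => // h _.
  + have := P6 c cs N _ mS; lia.
  + rewrite h; lia.
Qed.

Lemma xcrit_core i : 1 <= i <= n -> xcrit n lam (core n lam b) i = xcrit n lam b i.
Proof. by move=> hi; rewrite /xcrit core_crit_eq. Qed.

Lemma core_at_crit i : 1 <= i <= n ->
  ent (core n lam b) (xcrit n lam b i) = ent b (xcrit n lam b i).
Proof.
move=> hi.
have [[/andP[ci ich] hn] mS /andP[im mh] _ _] := xcrit_props hi.
have m1n : 1 <= xcrit n lam b i <= n by lia.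
by rewrite ent_core // (xcrit_self hi mS) subnn subn0.
Qed.

Lemma core_UBP : UBP n lam (core n lam b).
Proof.
split; first exact: core_upper.
move=> i hi; rewrite ent_platform // xcrit_core // core_at_crit // ent_core //; lia.
Qed.

Lemma core_flag : flag_crit n lam b -> flag_crit n lam (core n lam b).
Proof.
move=> F q Rq; have := F q Rq.
have /andP[q1 qn] := inR_bounds Rq.
have hq : 1 <= q.+1 <= n by lia.
have clq : clo n lam q.+1 = q.
  apply: clo_unique => // q' /andP[]; lia.
have := core_crit_eq hq; rewrite clq => ->.
have [[/andP[_ ich] hn] _ _ _ _] := xcrit_props hq.
have lohi : q < chi n lam q.+1 by lia.
have [P1 P2 _ _] := crit_from_props b (f := chi n lam q.+1) (x := chi n lam q.+1) lohi (leqnn _).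
rewrite -/(crit b q (chi n lam q.+1)) in P1 P2.
set k := \big[minn/n]_(c <- crit b q (chi n lam q.+1)) c.
have kS : k \in crit b q (chi n lam q.+1).
  have kle : k <= chi n lam q.+1.
    exact: (@bigmin_leF nat _ (fun _ => true) (fun c => c) n _ P2).
  rewrite /k; have [e|[c /andP[cs _] ->]] := bigmin_mem (crit b q (chi n lam q.+1)) (fun _ => true) (fun c => c) n => //.
  rewrite e; rewrite /k e in kle; have hc : chi n lam q.+1 = n by lia.
  by rewrite -{1}hc.
have q1n : 1 <= q <= n by lia.
have chq : chi n lam q = q.
  by apply: chi_unique; [lia| |move=> q' /andP[]; lia].
have xq : xcrit n lam b q = q.
  have [_ _ /andP[im mh] _ _] := xcrit_props q1n; rewrite chq in mh; lia.
have eq1 : ent (core n lam b) q = ent b q.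
  by have := core_at_crit q1n; rewrite xq.
have eq2 : ent (core n lam b) k = ent b k.
  have ks := xcrit_self hq; rewrite clq in ks; have := core_at_crit (i := k).
  have /andP[qk kc] := P1 k kS.
  rewrite (ks k kS); apply; lia.
by rewrite eq1 eq2.
Qed.

End CoreProps.

Section Tab.
Variables (n : nat) (lam : seq nat).
Hypothesis Hlam : is_partition n lam.

Local Notation TT := {ffun 'I_n * 'I_(ncols lam) -> 'I_n.+1}.

Lemma indiag_mono (a b : nat) j : a <= b -> indiag lam b j -> indiag lam a j.
Proof. rewrite /indiag => ab; have := lam_mono Hlam ab; lia. Qed.

Lemma ncols_ge (a : nat) : nth 0 lam a <= ncols lam.
Proof. rewrite /ncols; exact: lam_mono Hlam (leq0n a). Qed.

Section OneTab.
Variables (b : seq nat) (X : TT).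
Hypothesis HX : ssyt n lam b X.

Lemma ssyt_bound (c : 'I_n * 'I_(ncols lam)) : indiag lam c.1 c.2 -> 1 <= X c <= nth 0 b c.1.
Proof. by move=> hc; case/and3P: HX => /forallP /(_ c); rewrite hc. Qed.

Lemma ssyt_out (c : 'I_n * 'I_(ncols lam)) : ~~ indiag lam c.1 c.2 -> X c = ord0.
Proof. by move=> /negbTE hc; case/and3P: HX => /forallP /(_ c); rewrite hc => /eqP. Qed.

Lemma ssyt_row (i : 'I_n) (j1 j2 : 'I_(ncols lam)) :
  j1 <= j2 -> indiag lam i j2 -> X (i, j1) <= X (i, j2).
Proof.
move=> h1 h2; case/and3P: HX => _ /forallP /(_ i) /forallP /(_ j1) /forallP /(_ j2) + _.
by rewrite h1 h2 => /implyP; apply.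
Qed.

Lemma ssyt_col (i1 i2 : 'I_n) (j : 'I_(ncols lam)) :
  i1 < i2 -> indiag lam i2 j -> X (i1, j) < X (i2, j).
Proof.
move=> h1 h2; case/and3P: HX => _ _ /forallP /(_ i1) /forallP /(_ i2) /forallP /(_ j).
by rewrite h1 h2 => /implyP; apply.
Qed.

Lemma col_iter (j : 'I_(ncols lam)) d : forall (a c : 'I_n), c = a + d :> nat ->
  indiag lam c j -> X (a, j) + d <= X (c, j).
Proof.
elim: d => [|d IH] a c e hc.
- by rewrite addn0 (_ : a = c) //; apply: val_inj => /=; rewrite e addn0.
- have lt : a + d < n by have := ltn_ord c; lia.
  have := IH a (Ordinal lt) erefl (indiag_mono (_ : a + d <= c) hc).
  have := ssyt_col (i1 := Ordinal lt) (i2 := c) (j := j) (_ : a + d < c) hc.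
  rewrite /=; lia.
Qed.

Lemma ssyt_ge_row (c : 'I_n * 'I_(ncols lam)) : indiag lam c.1 c.2 -> c.1.+1 <= X c.
Proof.
case: c => a j /= hc.
have n0 : 0 < n by have := ltn_ord a; lia.
have := col_iter (a := Ordinal n0) (c := a) (d := a) erefl hc.
have := ssyt_bound (c := (Ordinal n0, j)) (indiag_mono (_ : 0 <= a) hc).
rewrite /=; lia.
Qed.

End OneTab.

Lemma ssyt_core b X : upper n b -> ssyt n lam b X -> ssyt n lam (core n lam b) X.
Proof.
move=> Hb HX; have := HX; case/and3P=> _ HR HC; apply/and3P; split=> //.
apply/forallP=> c; case: ifP => hc; last by rewrite (ssyt_out HX) ?hc.
have /andP[X1 Xb] := ssyt_bound HX hc.
rewrite X1 /=.
case: c hc X1 Xb => a j /= hc X1 Xb.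
set r := nat_of_ord a; have r1n : 1 <= r.+1 <= n by have := ltn_ord a; lia.
have -> : nth 0 (core n lam b) a = ent (core n lam b) r.+1 by [].
rewrite ent_core //.
have [[/andP[ci ich] hn] mS /andP[im mh] _ _] := xcrit_props lam b r1n.
set m := xcrit n lam b r.+1 in im mh *.
have lm : ent lam m = ent lam r.+1 by apply: (lam_carrel Hlam) => //; rewrite im mh.
have El : ent lam r.+1 = nth 0 lam a := erefl.
have lpos : 0 < nth 0 lam a by move: hc; rewrite /indiag; lia.
have colok : (nth 0 lam a).-1 < ncols lam by have := ncols_ge a; lia.
set jc := Ordinal colok.
have mlt : m.-1 < n by lia.
have Em : ent lam m = nth 0 lam (Ordinal mlt) := erefl.
have hm : indiag lam (Ordinal mlt) jc.
  rewrite /indiag -Em lm El /=; lia.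
have hjc : indiag lam a jc by rewrite /indiag /=; lia.
have hj : j <= jc by move: hc; rewrite /indiag /=; lia.
have h1 := ssyt_row HX (i := a) (j1 := j) (j2 := jc) hj hjc.
have e : (Ordinal mlt : nat) = a + (m - r.+1) by rewrite /=; lia.
have h2 := col_iter HX (j := jc) (a := a) (c := Ordinal mlt) (d := m - r.+1) e hm.
have h3 := ssyt_bound HX (c := (Ordinal mlt, jc)) hm.
move: h1 h2 h3; rewrite /= -/(ent b m) => h1 h2 h3.
lia.
Qed.

Lemma ssyt_uncore b X : upper n b -> ssyt n lam (core n lam b) X -> ssyt n lam b X.
Proof.
move=> Hb HX; have := HX; case/and3P=> _ HR HC; apply/and3P; split=> //.
apply/forallP=> c; case: ifP => hc; last by rewrite (ssyt_out HX) ?hc.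
have /andP[X1 Xb] := ssyt_bound HX hc.
rewrite X1 /=; apply: leq_trans Xb _.
have r1n : 1 <= c.1.+1 <= n by have := ltn_ord c.1; lia.
exact: (core_le b Hlam r1n).
Qed.

Lemma schur_core b : upper n b -> schur n lam (core n lam b) = schur n lam b.
Proof.
move=> Hb; apply: eq_bigl => X; apply/idP/idP; [exact: ssyt_uncore|exact: ssyt_core].
Qed.

End Tab.

Definition incr_carrels n lam (g : seq nat) : Prop :=
  forall k, 1 <= k < n -> chi n lam k = chi n lam k.+1 -> ent g k < ent g k.+1.

Lemma incr_carrel n lam g i r : is_partition n lam -> incr_carrels n lam g ->
  1 <= i <= n -> i <= r <= chi n lam i -> ent g i + (r - i) <= ent g r.
Proof.
move=> Hlam Hinc hi; have /andP[ic cn] := chi_bounds lam (n := n) (i := i) (proj2 (andP hi)).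
have ci := clo_bounds n lam (proj1 (andP hi)).
elim: r => [|r IH] /andP[ir rc]; first lia.
case: (ltngtP i r.+1) => h; last by rewrite h subnn addn0.
- have := IH (introT andP (conj (h : i <= r) (ltnW rc))).
  have c1 : clo n lam i < r <= chi n lam i by lia.
  have c2 : clo n lam i < r.+1 <= chi n lam i by lia.
  have [_ e1] := carrel_same hi c1.
  have [_ e2] := carrel_same hi c2.
  have c3 : 1 <= r < n by lia.
  have := Hinc r c3; rewrite e1 e2 => /(_ erefl); lia.
- lia.
Qed.

Section Key.
Variables (n : nat) (lam g : seq nat) (i : nat).
Hypothesis Hlam : is_partition n lam.
Hypothesis Hg : upper n g.
Hypothesis Hinc : incr_carrels n lam g.
Hypothesis Hi : 1 <= i <= n.
Hypothesis Hpos : 0 < ent lam i.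

Let gup r : 1 <= r <= n -> r <= ent g r <= n.
Proof. by case: Hg => _; apply. Qed.

Definition Mv (r j : nat) : nat :=
  \big[minn/ent g r]_(r <= r' < n.+1 | j < ent lam r') (ent g r' - (r' - r)).

Lemma Mv_le r j : Mv r j <= ent g r.
Proof. exact: bigmin_led. Qed.

Lemma Mv_ge r j : 1 <= r <= n -> r <= Mv r j.
Proof.
move=> hr; apply: bigmin_geP; first by have := gup hr; lia.
move=> r'; rewrite mem_index_iota => hr' _; have := gup (_ : 1 <= r' <= n); lia.
Qed.

Lemma Mv_row r j1 j2 : j1 <= j2 -> Mv r j1 <= Mv r j2.
Proof.
move=> hj; apply: bigmin_geP; first exact: Mv_le.
move=> r' hr' h; apply: bigmin_leF => //; lia.
Qed.

Lemma Mv_col r1 r2 j : 1 <= r1 -> r1 < r2 <= n -> j < ent lam r2 ->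
  Mv r1 j + (r2 - r1) <= Mv r2 j.
Proof.
move=> h1 h12 hj.
have t2 : Mv r1 j <= ent g r2 - (r2 - r1).
  apply: bigmin_leF => //; rewrite mem_index_iota; lia.
apply: bigmin_geP; first by have := gup (_ : 1 <= r2 <= n); lia.
move=> r'; rewrite mem_index_iota => hr' hj'.
have : Mv r1 j <= ent g r' - (r' - r1) by apply: bigmin_leF => //; rewrite mem_index_iota; lia.
have := gup (_ : 1 <= r' <= n); lia.
Qed.

Lemma Mv_last : Mv i (ent lam i).-1 = ent g i.
Proof.
apply/eqP; rewrite eqn_leq Mv_le /=.
apply: bigmin_geP => // r'; rewrite mem_index_iota => hr' hl.
have /andP[ic cn] := chi_bounds lam (n := n) (i := i) (proj2 (andP Hi)).
case: (leqP r' (chi n lam i)) => hrc.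
- have ii : i <= r' <= chi n lam i by lia.
  have := incr_carrel Hlam Hinc Hi ii; lia.
- exfalso.
  have cn' : chi n lam i < n by lia.
  have cR := chi_inR cn'.
  have ii : i <= chi n lam i <= chi n lam i by lia.
  have := lam_carrel Hlam Hi ii.
  have ii' : 1 <= (chi n lam i).+1 <= r' by lia.
  have := ent_mono Hlam ii'.
  move: cR; rewrite /inR => /and3P[_ _]; lia.
Qed.

Definition Tv (r j : nat) : nat :=
  if j < ent lam r then (if r < i then r else Mv r j) else 0.

Lemma Tv_le r j : 1 <= r <= n -> Tv r j <= n.
Proof.
move=> hr; rewrite /Tv; case: ifP => // _; case: ifP; first lia.
move=> _; have := Mv_le r j; have := gup hr; lia.
Qed.

Definition Tm : {ffun 'I_n * 'I_(ncols lam) -> 'I_n.+1} :=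
  [ffun c : 'I_n * 'I_(ncols lam) => inord (Tv c.1.+1 c.2)].

Lemma Tm_val (c : 'I_n * 'I_(ncols lam)) : (Tm c : nat) = Tv c.1.+1 c.2.
Proof.
rewrite ffunE inordK //; apply: Tv_le; have := ltn_ord c.1; lia.
Qed.

Lemma Tm_ssyt : ssyt n lam g Tm.
Proof.
apply/and3P; split.
- apply/forallP=> -[a j]; rewrite /indiag /=; case: ifP => hc.
  + rewrite Tm_val /Tv /= -/(ent lam a.+1).
    have -> : (j : nat) < ent lam a.+1 by [].
    have r1 : 1 <= a.+1 <= n by have := ltn_ord a; lia.
    have := gup r1; have := Mv_ge j r1; have := Mv_le a.+1 j.
    rewrite -/(ent g a.+1); case: ifP => _; lia.
  + apply/eqP; apply: val_inj => /=; rewrite Tm_val /Tv /= -/(ent lam a.+1).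
    by have -> : ((j : nat) < ent lam a.+1) = false by [].
- apply/forallP=> a; apply/forallP=> j1; apply/forallP=> j2; apply/implyP=> /andP[hj hd].
  rewrite !Tm_val /Tv /=.
  have -> : (j2 : nat) < ent lam a.+1 by [].
  have -> : (j1 : nat) < ent lam a.+1 by rewrite /indiag in hd; rewrite /ent /=; lia.
  case: ifP => // _; exact: Mv_row.
- apply/forallP=> a1; apply/forallP=> a2; apply/forallP=> j; apply/implyP=> /andP[ha hd].
  rewrite !Tm_val /Tv /=.
  have hd1 : indiag lam a1 j by apply: (indiag_mono Hlam (_ : (a1 : nat) <= a2) hd); lia.
  have -> : (j : nat) < ent lam a2.+1 by [].
  have -> : (j : nat) < ent lam a1.+1 by [].
  have r2 : 1 <= a2.+1 <= n by have := ltn_ord a2; lia.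
  have r1 : 1 <= a1.+1 <= n by have := ltn_ord a1; lia.
  have := Mv_ge j r2.
  case: ifP => h1; case: ifP => h2; try lia.
  have := Mv_col (r1 := a1.+1) (r2 := a2.+1) (j := j) (_ : 1 <= a1.+1) (_ : a1.+1 < a2.+1 <= n) hd.
  lia.
Qed.

End Key.

Definition mt n lam (X : {ffun 'I_n * 'I_(ncols lam) -> 'I_n.+1}) : 'X_{1..n} :=
  [multinom theta n lam X k | k < n].

Section SC.
Local Open Scope ring_scope.
Lemma schur_coef n lam b m :
  mcoeff m (schur n lam b) = (((\sum_(X | ssyt n lam b X) (mt X == m : nat))%N)%:R)%R.
Proof.
rewrite /schur raddf_sum /= natr_sum; apply: eq_bigr => X _.
rewrite (_ : \prod_(k < n) 'X_k ^+ theta n lam X k = 'X_[mt X]) ?mcoeffX //.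
by rewrite mpolyXE_id; apply: eq_bigr => k _; rewrite mnmE.
Qed.
End SC.

Lemma same_content n lam b b' T : schur n lam b = schur n lam b' -> ssyt n lam b T ->
  exists S, ssyt n lam b' S /\ forall k, theta n lam S k = theta n lam T k.
Proof.
move=> H HT.
have := congr1 (mcoeff (mt T)) H; rewrite !schur_coef => /eqP; rewrite eqr_nat => /eqP E.
have pos : (0 < \sum_(X | ssyt n lam b X) (mt X == mt T : nat))%N.
  by rewrite (bigD1 T) //= eqxx.
case: (pickP (fun S => ssyt n lam b' S && (mt S == mt T))) => [S /andP[HS /eqP e]|none].
- exists S; split=> // k; have := congr1 (fun m : 'X_{1..n} => m k) e; by rewrite /= !mnmE.
- exfalso; move: pos; rewrite E big1 // => X HX; have := none X; rewrite HX /=.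
  by case: (mt X == mt T).
Qed.

Lemma weight_theta n lam b (X : {ffun 'I_n * 'I_(ncols lam) -> 'I_n.+1}) (f : nat -> nat) :
  ssyt n lam b X ->
  (\sum_(c : 'I_n * 'I_(ncols lam) | indiag lam c.1 c.2) f (X c) = \sum_(k < n) f k.+1 * theta n lam X k)%N.
Proof.
move=> HX.
have th k : theta n lam X k = (\sum_(c : 'I_n * 'I_(ncols lam) | indiag lam c.1 c.2 && (X c == k.+1 :> nat)) 1)%N.
  by rewrite /theta -sum1_card; apply: eq_bigl => c; rewrite inE.
symmetry.
under eq_bigr => k _ do rewrite th big_distrr /= muln1 big_mkcond /=.
rewrite exchange_big /= [RHS]big_mkcond /=; apply: eq_bigr => c _.
case: ifP => hc /=; last by rewrite big1 // => k _; rewrite hc.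
have /andP[X1 _] := ssyt_bound HX hc.
have Xn := ltn_ord (X c).
have k0lt : ((X c : nat).-1 < n)%N by lia.
rewrite (bigD1 (Ordinal k0lt)) //= big1 ?addn0.
- by rewrite (_ : (X c : nat).-1.+1 = X c) ?eqxx //; lia.
- move=> k nk; case: ifP => // /eqP e; exfalso; move/negP: nk; apply; apply/eqP; apply: val_inj => /=; lia.
Qed.

Lemma ltn_sum_pt (I : finType) (P : pred I) (F G : I -> nat) c0 :
  (forall c, P c -> F c <= G c) -> P c0 -> F c0 < G c0 ->
  (\sum_(c | P c) F c < \sum_(c | P c) G c)%N.
Proof.
move=> le P0 lt0; rewrite (bigD1 c0) // [X in (_ < X)%N](bigD1 c0) //=.
rewrite -addSn; apply: leq_add => //.
by apply: leq_sum => c /andP[Pc _]; apply: le.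
Qed.

Lemma key n lam g g' i : is_partition n lam -> upper n g -> upper n g' ->
  incr_carrels n lam g -> 1 <= i <= n -> 0 < ent lam i -> ent g' i < ent g i ->
  (forall r, i <= r <= n -> ent g' r <= ent g r) ->
  schur n lam g = schur n lam g' -> False.
Proof.
move=> Hlam Hg Hg' Hinc Hi Hpos Hlt Hge Hs.
set T := Tm n lam g i.
have HT : ssyt n lam g T := Tm_ssyt Hlam Hg Hi Hpos.
have [S [HS th]] := same_content Hs HT.
have W (f : nat -> nat) : \sum_(c : 'I_n * 'I_(ncols lam) | indiag lam c.1 c.2) f (S c)
    = \sum_(c : 'I_n * 'I_(ncols lam) | indiag lam c.1 c.2) f (T c).
  by rewrite (weight_theta f HS) (weight_theta f HT); apply: eq_bigr => k _; rewrite th.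
have Tval (c : 'I_n * 'I_(ncols lam)) : indiag lam c.1 c.2 ->
    (T c : nat) = if c.1.+1 < i then c.1.+1 else Mv n lam g c.1.+1 c.2.
  by move=> hc; rewrite /T Tm_val // /Tv; have -> : c.2 < ent lam c.1.+1 by [].
have Sge := ssyt_ge_row Hlam HS.
have Tge (c : 'I_n * 'I_(ncols lam)) : indiag lam c.1 c.2 -> c.1.+1 <= T c.
  move=> hc; rewrite Tval //; case: ifP => // _.
  apply: (Mv_ge Hlam Hg Hi Hpos); have := ltn_ord c.1; lia.
have S1 (c : 'I_n * 'I_(ncols lam)) : indiag lam c.1 c.2 -> c.1.+1 < i -> S c < i.
  move=> hc hr; rewrite ltnNge; apply/negP=> hS.
  have E := W (fun v => (i <= v : nat)); rewrite /= in E.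
  suff : (\sum_(c : 'I_n * 'I_(ncols lam) | indiag lam c.1 c.2) (i <= T c : nat)
     < \sum_(c : 'I_n * 'I_(ncols lam) | indiag lam c.1 c.2) (i <= S c : nat))%N by rewrite E ltnn.
  apply: (ltn_sum_pt (c0 := c)) => //.
  - move=> d hd; have := Sge d hd; rewrite Tval //; case: ifP => h.
    + by rewrite (_ : (i <= d.1.+1) = false) //; apply/negbTE; rewrite -ltnNge.
    + have := Mv_ge Hlam Hg Hi Hpos (r := d.1.+1) d.2; have := ltn_ord d.1.
      case: (leqP i (S d)) => h1; case: (leqP i (Mv n lam g d.1.+1 d.2)) => h2; lia.
  - rewrite hS Tval // hr /=; by rewrite (_ : (i <= c.1.+1) = false) //; apply/negbTE; rewrite -ltnNge.
have a0lt : i.-1 < n by lia.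
have j0lt : (ent lam i).-1 < ncols lam by have := ncols_ge Hlam i.-1; rewrite /ent in Hpos *; lia.
set c0 : 'I_n * 'I_(ncols lam) := (Ordinal a0lt, Ordinal j0lt).
have hc0 : indiag lam c0.1 c0.2 by rewrite /indiag /= -/(ent lam i.-1.+1) (_ : i.-1.+1 = i); lia.
have E := W (fun v => v * (i <= v)); rewrite /= in E.
suff : (\sum_(c : 'I_n * 'I_(ncols lam) | indiag lam c.1 c.2) (S c * (i <= S c))
   < \sum_(c : 'I_n * 'I_(ncols lam) | indiag lam c.1 c.2) (T c * (i <= T c)))%N by rewrite E ltnn.
apply: (ltn_sum_pt (c0 := c0)) => //.
- move=> [a j] hd; have := Tval (a, j) hd; have := S1 (a, j) hd; have := Tge (a, j) hd.
  have := ssyt_bound HS hd; rewrite /= => Sb TT S1' hT.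
  case: (ltnP a.+1 i) => hr.
  + have := S1' hr; case: (leqP i (S (a, j))) => //; lia.
  + rewrite ltnNge hr /= in hT; rewrite hT in TT.
    have hd1 : 1 <= a.+1 <= n by have := ltn_ord a; lia.
    have SM : S (a, j) <= Mv n lam g a.+1 j.
      apply: bigmin_geP.
      * have hh : i <= a.+1 <= n by lia.
        have := Hge a.+1 hh; rewrite /ent /=; lia.
      * move=> r'; rewrite mem_index_iota => /andP[rr rn] hj.
        have rlt : r'.-1 < n by lia.
        have hd' : indiag lam (Ordinal rlt) j := hj.
        have e : (Ordinal rlt : nat) = a + (r' - a.+1) by rewrite /=; lia.
        have := col_iter Hlam HS (j := j) (a := a) (c := Ordinal rlt) (d := r' - a.+1) e hd'.
        have := ssyt_bound HS (c := (Ordinal rlt, j)) hd'.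
        have hh : i <= r' <= n by lia.
        have := Hge r' hh.
        rewrite /= -/(ent g' r'.-1.+1) (_ : r'.-1.+1 = r'); lia.
    have h2 : i <= Mv n lam g a.+1 j by lia.
    rewrite hT h2 muln1; apply: leq_trans _ SM; by case: (i <= _); rewrite /= ?muln1 ?muln0.
- have hT0 := Tval c0 hc0.
  have e1 : (c0.1 : nat).+1 = i by rewrite /=; lia.
  rewrite e1 ltnn (_ : (c0.2 : nat) = (ent lam i).-1) // Mv_last // in hT0.
  rewrite hT0.
  have := ssyt_bound HS hc0.
  rewrite (_ : nth 0 g' c0.1 = ent g' i); last by rewrite -e1.
  move=> h3.
  have h4 : i <= ent g i by case: Hg => _ /(_ i Hi); lia.
  rewrite h4 muln1.
  apply: leq_ltn_trans (_ : _ <= S c0) _; first by case: (i <= _); rewrite /= ?muln1 ?muln0.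
  move: h3 Hlt; lia.
Qed.

Lemma chi_zero n lam i : is_partition n lam -> 1 <= i <= n -> ent lam i = 0 -> chi n lam i = n.
Proof.
move=> Hlam hi z; apply: chi_unique; first lia.
  by rewrite ltnn.
move=> q /andP[iq qn]; rewrite /inR; apply/negP=> /and3P[q1 _].
have := ent_mono Hlam (_ : 1 <= i <= q); rewrite z; lia.
Qed.

Lemma schur_inj n lam g g' : is_partition n lam -> upper n g -> upper n g' ->
  incr_carrels n lam g -> incr_carrels n lam g' ->
  schur n lam g = schur n lam g' -> g = g'.
Proof.
move=> Hlam Hg Hg' Hinc Hinc' Hs.
have step i : (forall r, i < r <= n -> ent g r = ent g' r) -> 1 <= i <= n -> ent g i = ent g' i.
  move=> IH hi.
  have [gi gn] := andP (proj2 Hg i hi).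
  have [gi' gn'] := andP (proj2 Hg' i hi).
  case: (posnP (ent lam i)) => hz.
  - have cz := chi_zero Hlam hi hz.
    have hin : i <= n <= chi n lam i by lia.
    have := incr_carrel Hlam Hinc hi hin.
    have := incr_carrel Hlam Hinc' hi hin.
    have n1 : 1 <= n <= n by lia.
    have := proj2 Hg n n1; have := proj2 Hg' n n1; lia.
  - case: (ltngtP (ent g i) (ent g' i)) => h //.
    + exfalso; apply: (key Hlam Hg' Hg Hinc' hi hz h) (esym Hs) => r /andP[ir rn].
      case: (ltngtP i r) ir => // h2 _; first by rewrite IH //; lia.
      rewrite -h2; lia.
    + exfalso; apply: (key Hlam Hg Hg' Hinc hi hz h) Hs => r /andP[ir rn].
      case: (ltngtP i r) ir => // h2 _; first by rewrite IH //; lia.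
      rewrite -h2; lia.
have all_eq : forall k i, n - i <= k -> 1 <= i <= n -> ent g i = ent g' i.
  elim=> [|k IH] i hk hi; apply: step => // r hr; first lia.
  apply: IH; lia.
case: Hg => sg _; case: Hg' => sg' _.
apply: (@eq_from_nth _ 0); first by rewrite sg sg'.
move=> k; rewrite sg => kn.
have := all_eq n k.+1 (leq_subr _ _) (_ : 1 <= k.+1 <= n).
by rewrite /ent /=; apply; lia.
Qed.

Definition hP n u i k (m : 'X_{1..n < u.+1}) : bool :=
  (mdeg m == u) && [forall l : 'I_n, (m l != 0) ==> (i <= l.+1 <= k)].

Section HC.
Local Open Scope ring_scope.
Lemma hpoly_coef n u i k m0 :
  mcoeff m0 (hpoly n u i k) = (((\sum_(m : 'X_{1..n < u.+1} | hP i k m) (bmnm m == m0 : nat))%N)%:R).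
Proof.
rewrite /hpoly raddf_sum /= natr_sum; apply: eq_bigr => m _.
by rewrite mcoeffX.
Qed.
End HC.

Lemma hpoly_supp n u i k m0 :
  (m0 \in msupp (hpoly n u i k)) = (0 < \sum_(m : 'X_{1..n < u.+1} | hP i k m) (bmnm m == m0 : nat))%N.
Proof. by rewrite mcoeff_msupp hpoly_coef pnatr_eq0 lt0n. Qed.

Lemma hpoly_sub n u i k k' : k <= k' ->
  {subset msupp (hpoly n u i k) <= msupp (hpoly n u i k')}.
Proof.
move=> kk m0; rewrite !hpoly_supp => h; apply: leq_trans h _.
rewrite [X in (X <= _)%N]big_mkcond [X in (_ <= X)%N]big_mkcond /=.
apply: leq_sum => m _; rewrite /hP.
case: (mdeg m == u) => //=.
case: ifP => // /forallP H; rewrite (_ : [forall l, _] = true) //.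
apply/forallP=> l; have := H l; case: (m l != 0) => //= /andP[a b]; apply/andP; split=> //; lia.
Qed.

Lemma hpoly_size_mono n u i k k' : k <= k' ->
  (size (msupp (hpoly n u i k)) <= size (msupp (hpoly n u i k')))%N.
Proof. move=> kk; apply: uniq_leq_size; [exact: msupp_uniq|exact: hpoly_sub]. Qed.

Lemma hpoly_size_strict n u i k k' : 1 <= u -> i <= k' <= n -> k < k' ->
  (size (msupp (hpoly n u i k)) < size (msupp (hpoly n u i k')))%N.
Proof.
move=> u1 /andP[ik kn] kk.
have l0lt : k'.-1 < n by lia.
set l0 : 'I_n := Ordinal l0lt.
set ms : 'X_{1..n} := (U_(l0) *+ u)%MM.
have dms : mdeg ms = u by rewrite /ms mdegMn mdeg1 mul1n.
have bms : (mdeg ms < u.+1)%N by rewrite dms.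
set mb : 'X_{1..n < u.+1} := BMultinom bms.
have msl l : ms l = ((l0 == l) * u)%N by rewrite /ms mulmnE mnm1E.
have in' : ms \in msupp (hpoly n u i k').
  rewrite hpoly_supp (bigD1 mb) /=; first by rewrite eqxx.
  rewrite /hP /= dms eqxx /=; apply/forallP=> l; rewrite msl.
  case: (eqVneq l0 l) => [<-|_] /=; last by [].
  rewrite mul1n; apply/implyP=> _; rewrite /l0 /=; lia.
have out : ms \notin msupp (hpoly n u i k).
  rewrite hpoly_supp -leqNgt leqn0 sum_nat_eq0; apply/forallP=> m; apply/implyP.
  rewrite /hP => /andP[_ /forallP /(_ l0) /implyP H].
  case: (eqVneq (bmnm m) ms) => [e|] //=; exfalso; move: H; rewrite e msl eqxx mul1n -lt0n u1 /l0 /= => /(_ isT); lia.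
have : (size (ms :: msupp (hpoly n u i k)) <= size (msupp (hpoly n u i k')))%N.
  apply: uniq_leq_size; first by rewrite /= out msupp_uniq.
  move=> x; rewrite inE => /orP[/eqP->//|]; exact: hpoly_sub (ltnW kk) x.
by [].
Qed.

Lemma GVentry n lam b (i j : 'I_n) :
  GVmx n lam b i j = if ent lam j.+1 + i.+1 < j.+1 then 0%R
      else hpoly n (ent lam j.+1 + i.+1 - j.+1) i.+1 (ent b j.+1).
Proof. by rewrite /GVmx mxE. Qed.

Lemma entry_mono n lam b b' (i j : 'I_n) : ent b j.+1 <= ent b' j.+1 ->
  size (msupp (GVmx n lam b i j)) <= size (msupp (GVmx n lam b' i j)).
Proof.
move=> h; rewrite !GVentry; case: ifP => _; first by rewrite msupp0.
exact: hpoly_size_mono.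
Qed.

Lemma cost_lt n lam b b' j0 : (forall j, 1 <= j <= n -> ent b j <= ent b' j) ->
  1 <= j0 < n -> ent b j0 < ent b' j0 -> j0 < ent b' j0 <= n ->
  GVcost n lam b < GVcost n lam b'.
Proof.
move=> le hj lt hb.
have i0lt : j0 < n by lia.
have jlt : j0.-1 < n by lia.
apply: (ltn_sum_pt (P := fun _ => true) (c0 := Ordinal i0lt)) => //.
- move=> i _; apply: leq_sum => j _; apply: entry_mono; apply: le; have := ltn_ord j; lia.
- apply: (ltn_sum_pt (P := fun _ => true) (c0 := Ordinal jlt)) => //.
  + move=> j _; apply: entry_mono; apply: le; have := ltn_ord j; lia.
  + rewrite !GVentry /= (_ : j0.-1.+1 = j0); last lia.
    rewrite (_ : (ent lam j0 + j0.+1 < j0) = false); last lia.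
    apply: hpoly_size_strict; lia.
Qed.

Unset Implicit Arguments.

Theorem proposition8p3 (n : nat) (lam eta : seq nat) :
  1 <= n -> is_partition n lam -> UGC n lam eta ->
  gapless n lam (core n lam eta) /\ max_efficiency n lam (core n lam eta).
Proof.
move=> n1 Hlam [Hu Hf].
have Du := core_upper Hlam Hu.
have Df := core_flag Hlam Hu Hf.
have Dinc : incr_carrels n lam (core n lam eta).
  by move=> k hk e; apply: (core_incr Hlam Hu).
split; first by split.
split; first by split.
split; first exact: core_UBP.
move=> eta' [Hu' Hf'] _ ne Hs.
set d := core n lam eta in Du Df Dinc ne Hs *.
have Binc : incr_carrels n lam (core n lam eta').
  by move=> k hk e; apply: (core_incr Hlam Hu').
have Bu := core_upper Hlam Hu'.
have Eb : core n lam eta' = d.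
  apply: (schur_inj Hlam Bu Du Binc Dinc); by rewrite (schur_core Hlam Hu') Hs.
have le j : 1 <= j <= n -> ent d j <= ent eta' j.
  by move=> hj; rewrite -Eb; apply: core_le.
have : ~~ all (fun j => ent d j == ent eta' j) (iota 1 n).
  apply/negP=> /allP A; apply: ne.
  case: Hu' => s' _; case: Du => sd _.
  apply: (@eq_from_nth _ 0); first by rewrite s' sd.
  move=> k; rewrite s' => kn; apply/esym/eqP.
  have := A k.+1; rewrite mem_iota; apply; lia.
rewrite -has_predC => /hasP [j]; rewrite mem_iota => hj /= nej.
have hjn : 1 <= j <= n by lia.
have ltj : ent d j < ent eta' j by have := le j hjn; move: nej; rewrite neq_ltn; lia.
have [_ ud] := Du; have [_ ue] := Hu'.
have := ud j hjn; have := ue j hjn => h1 h2.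
apply: (@cost_lt n lam d eta' j) => //; try lia.
Qed.
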